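(* For the Diverse Population-Based EA on the weighted vertex cover problem with $n$ vertices, the search point $0^n$ is included in the population in expected time $O(n^2\log n)$.
   Context: Weighted vertex cover: $G=(V,E)$, $V=\{v_1,\dots,v_n\}$, $w:V\to\mathbb{N}^+$. Search points $x\in\{0,1\}^n$; $|x|_1$ is the number of ones. $Cost(x)=\sum_i w(v_i)x_i$; $G(x)=(V(x),E(x))$ with $V(x)=V\setminus\{v_i:x_i=1\}$, $E(x)$ = edges with no selected endpoint; $LP(x)$ = optimal value of: minimize $\sum_{v_i\in V(x)}w(v_i)y_i$ s.t. $y_i+y_j\ge1$ for $\{v_i,v_j\}\in E(x)$, $0\le y_i\le1$. Alternative mutation operator on $x$: choose $b\in\{0,1\}$ uniformly; if $b=1$, flip each $x_i$ with probability $1/2$ if $v_i$ is incident to an edge of $E(x)$ and with probability $1/n$ otherwise; if $b=0$, flip each bit independently with probability $1/n$. Diverse Population-Based EA: start with uniformly random $x$, $P=\{x\}$. Each iteration: choose $x\in P$ uniformly; create $x'$ by the alternative mutation operator; add $x'$ to $P$; let $P'=\{y\in P:|y|_1=|x'|_1\}$; let $y_{min_1}\in P'$ minimize $Cost(z)+LP(z)$ and $y_{min_2}\in P'$ minimize $Cost(z)+2LP(z)$ over $P'$; set $P\leftarrow(P\setminus P')\cup\{y_{min_1},y_{min_2}\}$. Time = number of iterations. *)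

(* Defs.v *)
From HB Require Import structures.
From mathcomp Require Import all_boot all_order all_algebra.
From mathcomp Require Import reals exp.
Set Implicit Arguments. Unset Strict Implicit. Unset Printing Implicit Defensive.
Import Order.TTheory GRing.Theory Num.Theory.
Local Open Scope ring_scope.

Section DiverseEA.
Context {R : realType} (n : nat).

Definition point := {ffun 'I_n -> bool}.
Definition pop := {set point}.

Definition zero_point : point := [ffun _ => false].

Definition ones (x : point) : nat := #|[set i | x i]|.

Context (e : rel 'I_n) (w : 'I_n -> nat).

Definition cost (x : point) : R := \sum_(i < n) ((w i)%:R * (x i)%:R).

Definition inVx (x : point) (i : 'I_n) : bool := ~~ x i.
Definition inEx (x : point) (i j : 'I_n) : bool := [&& e i j, ~~ x i & ~~ x j].

(* feasible solutions of the LP relaxation of G(x) (coordinates indexed by V(x);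
   values outside V(x) are irrelevant) *)
Definition lp_feasible (x : point) (y : 'I_n -> R) : Prop :=
  (forall i, inVx x i -> 0 <= y i <= 1) /\
  (forall i j, inEx x i j -> 1 <= y i + y j).

Definition lp_values (x : point) : classical_sets.set R :=
  fun c => exists y : 'I_n -> R, lp_feasible x y /\
           c = \sum_(i < n | inVx x i) (w i)%:R * y i.

Definition LP (x : point) : R := inf (lp_values x).

Definition f1 (x : point) : R := cost x + LP x.
Definition f2 (x : point) : R := cost x + 2 * LP x.

Definition incident (x : point) (i : 'I_n) : bool :=
  [exists j, inEx x i j || inEx x j i].

Definition flip_prob (p : 'I_n -> R) (x x' : point) : R :=
  \prod_(i < n) (if x i != x' i then p i else 1 - p i).

Definition mut_prob (x x' : point) : R :=
  2^-1 * flip_prob (fun i => if incident x i then 2^-1 else (n%:R)^-1) x x'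
  + 2^-1 * flip_prob (fun _ => (n%:R)^-1) x x'.

Definition argmin_selector (f : point -> R) (sel : pop -> point) : Prop :=
  forall S : pop, (0 < #|S|)%N -> sel S \in S /\ (forall z, z \in S -> f (sel S) <= f z).

Context (sel1 sel2 : pop -> point).

Definition update (P : pop) (x' : point) : pop :=
  let P1 := x' |: P in
  let P' := [set y in P1 | ones y == ones x'] in
  (P1 :\: P') :|: [set sel1 P'; sel2 P'].

Definition trans (P P2 : pop) : R :=
  \sum_(x in P) (#|P|%:R)^-1 *
    \sum_(x' : point) mut_prob x x' * (update P x' == P2)%:R.

Definition init_dist (P : pop) : R :=
  \sum_(x : point) ((2 ^ n)%:R)^-1 * (P == [set x])%:R.

(* surv t P = Pr[P_t = P and 0^n not in P_0, ..., P_t] *)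
Fixpoint surv (t : nat) (P : pop) : R :=
  match t with
  | 0 => if zero_point \in P then 0 else init_dist P
  | t'.+1 => if zero_point \in P then 0 else
             \sum_(Q : pop) surv t' Q * trans Q P
  end.

(* Pr[T > t], where T = first iteration at which 0^n is in the population *)
Definition tail_prob (t : nat) : R := \sum_(P : pop) surv t P.

(* E[T] = sum_{t >= 0} Pr[T > t]; partial sums *)
Definition expected_time_partial (N : nat) : R := \sum_(t < N) tail_prob t.

End DiverseEA.

Definition simple_graph (n : nat) (e : rel 'I_n) : Prop :=
  symmetric e /\ irreflexive e.

(* Main.v *)
Require Import Defs.
From HB Require Import structures.
From mathcomp Require Import all_boot all_order all_algebra.
From mathcomp Require Import reals exp sequences.
From mathcomp Require Import lra ring zify.
Import Order.TTheory GRing.Theory Num.Theory.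
Local Open Scope ring_scope.
Set Implicit Arguments. Unset Strict Implicit. Unset Printing Implicit Defensive.

Section Comb.
Variable n : nat.
Variables sel1 sel2 : pop n -> point n.
Hypothesis hsel1 : forall S : pop n, (0 < #|S|)%N -> sel1 S \in S.
Hypothesis hsel2 : forall S : pop n, (0 < #|S|)%N -> sel2 S \in S.

Lemma ones_le (x : point n) : (ones x <= n)%N.
Proof. by rewrite /ones -[X in (_ <= X)%N]card_ord max_card. Qed.

Lemma ones_eq0 (x : point n) : ones x = 0%N -> x = zero_point n.
Proof.
move/eqP; rewrite /ones cards_eq0 => /eqP H; apply/ffunP => i.
rewrite ffunE; apply/negP => xi.
have : i \in [set i | x i] by rewrite inE.
by rewrite H inE.
Qed.

Definition mP (P : pop n) : nat := (n - \max_(y in P) (n - ones y))%N.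

Lemma mP_le (P : pop n) y : y \in P -> (mP P <= ones y)%N.
Proof.
move=> yP; rewrite /mP.
have := @leq_bigmax_cond _ (fun i => i \in P) (fun y => n - ones y)%N y yP.
have := ones_le y. set M := (\max_(y in P) (n - ones y))%N. move: M => M. lia.
Qed.

Lemma mP_ge (P : pop n) k : (k <= n)%N -> (forall y, y \in P -> k <= ones y)%N -> (k <= mP P)%N.
Proof.
move=> kn H; rewrite /mP.
have : (\max_(y in P) (n - ones y) <= n - k)%N.
  by apply/bigmax_leqP => y /H h; apply: leq_sub2l.
set M := (\max_(y in P) (n - ones y))%N. move=> h. move: M h => M h. lia.
Qed.

Lemma mP_len (P : pop n) : (mP P <= n)%N.
Proof. by rewrite /mP leq_subr. Qed.

Lemma mP_ex (P : pop n) : P != set0 -> exists2 y, y \in P & ones y = mP P.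
Proof.
case/set0Pn => y0 y0P.
case: (boolP [exists y in P, ones y == mP P]).
  by case/exists_inP => y yP /eqP; exists y.
rewrite negb_exists_in => /forall_inP H.
have H1 : forall y, y \in P -> (mP P < ones y)%N.
  by move=> y yP; rewrite ltn_neqAle eq_sym (H y yP) mP_le.
case: (ltnP (mP P) n) => hm.
  by have := mP_ge hm H1; rewrite ltnn.
have := H1 _ y0P; have := ones_le y0; lia.
Qed.

Definition lvl (Q : pop n) (k : nat) : pop n := [set y in Q | ones y == k].
Definition Inv (Q : pop n) : bool := (Q != set0) && [forall k : 'I_n.+1, #|lvl Q k| <= 2]%N.

Lemma Inv_card (Q : pop n) : Inv Q -> (#|Q| <= 2 * n.+1)%N.
Proof.
case/andP => _ /forallP H.
have -> : #|Q| = (\sum_(y in Q) 1)%N by rewrite sum1_card.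
rewrite (partition_big (fun y => (Ordinal (n:=n.+1) (ones_le y : ones y < n.+1)%N)) xpredT) //=.
have -> : (2 * n.+1 = \sum_(k < n.+1) 2)%N by rewrite sum_nat_const card_ord mulnC.
apply: leq_sum => k _.
rewrite sum1_card.
apply: leq_trans (H k); apply: subset_leq_card; apply/subsetP => y.
by rewrite !inE => /andP[-> /eqP <-] /=.
Qed.

Definition P' (Q : pop n) (x' : point n) : pop n := [set y in x' |: Q | ones y == ones x'].

Lemma P'_card (Q : pop n) (x' : point n) : (0 < #|P' Q x'|)%N.
Proof. by rewrite card_gt0; apply/set0Pn; exists x'; rewrite !inE (eqxx x') eqxx. Qed.

Lemma sel1_in (Q : pop n) x' : sel1 (P' Q x') \in P' Q x'.
Proof. exact: hsel1 (P'_card Q x'). Qed.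
Lemma sel2_in (Q : pop n) x' : sel2 (P' Q x') \in P' Q x'.
Proof. exact: hsel2 (P'_card Q x'). Qed.

Lemma update_x' (Q : pop n) (x' : point n) : exists2 z, z \in update sel1 sel2 Q x' & ones z = ones x'.
Proof.
exists (sel1 (P' Q x')).
  by rewrite /update !inE eqxx orbT.
by have := sel1_in Q x'; rewrite inE => /andP[_ /eqP].
Qed.

Lemma update_lvl (Q : pop n) (x' : point n) y : y \in Q -> exists2 z, z \in update sel1 sel2 Q x' & ones z = ones y.
Proof.
move=> yQ; case: (eqVneq (ones y) (ones x')) => h.
  by rewrite h; apply: update_x'.
exists y => //; rewrite /update !inE yQ orbT /= h /=.
by [].
Qed.

Lemma update_ne0 (Q : pop n) (x' : point n) : update sel1 sel2 Q x' != set0.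
Proof. by apply/set0Pn; case: (update_x' Q x') => z zi _; exists z. Qed.

Lemma mP_update (Q : pop n) (x' : point n) : (mP (update sel1 sel2 Q x') <= mP Q)%N /\
                       (mP (update sel1 sel2 Q x') <= ones x')%N.
Proof.
split; last by case: (update_x' Q x') => z zi <-; apply: mP_le.
apply: mP_ge; first exact: mP_len.
move=> y yQ; case: (update_lvl x' yQ) => z zi <-; exact: mP_le.
Qed.

Lemma Inv_update (Q : pop n) (x' : point n) : Inv Q -> Inv (update sel1 sel2 Q x').
Proof.
case/andP => _ /forallP H; rewrite /Inv update_ne0 /=; apply/forallP => k.
case: (eqVneq (nat_of_ord k) (ones x')) => hk.
  apply: (@leq_trans #|[set sel1 (P' Q x'); sel2 (P' Q x')]|); last by rewrite cards2; case: (_ != _).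
  apply: subset_leq_card; apply/subsetP => y.
  rewrite /lvl /update !inE hk.
  move=> /andP[/or3P[/andP[hn hin] | -> | ->] he] //; last by rewrite orbT.
  by rewrite hin he in hn.
apply: leq_trans (H k); apply: subset_leq_card; apply/subsetP => y.
rewrite /lvl /update !inE => /andP[] /orP[].
  case/andP => _ /orP[/eqP -> |-> //]; by rewrite eq_sym (negbTE hk).
case/orP => /eqP -> /eqP hy.
  by have := sel1_in Q x'; rewrite inE hy => /andP[_ /eqP h]; rewrite h eqxx in hk.
by have := sel2_in Q x'; rewrite inE hy => /andP[_ /eqP h]; rewrite h eqxx in hk.
Qed.

End Comb.
Section H.
Variable R : realType.

Definition h (k : nat) : R := if k == 0%N then 0 else 1 + ln (k%:R : R).

Lemma ln_nat_ge0 k : (0 < k)%N -> 0 <= ln (k%:R : R).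
Proof. by move=> k0; apply: ln_ge0; rewrite ler1n. Qed.

Lemma h_ge0 k : 0 <= h k.
Proof.
rewrite /h; case: eqP => // /eqP k0.
have := ln_nat_ge0 (k:=k); rewrite lt0n k0 => /(_ isT); lra.
Qed.

Lemma h_mono k l : (k <= l)%N -> h k <= h l.
Proof.
move=> kl; rewrite {1}/h; case: eqP => [_|/eqP k0]; first exact: h_ge0.
have l0 : l != 0%N by apply: contra k0 => /eqP l0; move: kl; rewrite l0 leqn0.
rewrite /h (negbTE l0) lerD2l ler_ln ?ler_nat // posrE ltr0n lt0n //.
Qed.

Lemma h_gain m : (0 < m)%N -> (m%:R : R)^-1 <= h m - h m.-1.
Proof.
case: m => // -[|k] _.
  by rewrite /h /= ln1 invr1; lra.
rewrite /h /=.
have hk : (k.+1%:R : R) / k.+2%:R = 1 + - (k.+2%:R)^-1.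
  rewrite -!natr1; have : (0 : R) <= k%:R by [].
  move: (k%:R : R) => x hx; field.
  by apply: lt0r_neq0; lra.
have := @le_ln1Dx R (- (k.+2%:R)^-1).
rewrite -hk lnM ?posrE ?invr_gt0 ?ltr0n // lnV ?posrE ?ltr0n //.
have H : (k.+2%:R : R)^-1 < 1 by rewrite invf_lt1 ?ltr0n // ltr1n.
have : -1 < - (k.+2%:R : R)^-1 by rewrite ltrN2.
move=> h1 h2; have := h2 h1. move: (ln _) (ln _) ((k.+2%:R : R)^-1) => a b c. lra.
Qed.

End H.

Section E.
Variable R : realType.

Lemma pow_bound (k : nat) : (0 < k)%N ->
  (expR (1 : R))^-1 <= (1 - (k.+1%:R : R)^-1) ^+ k.
Proof.
move=> k0.
have kp : (0 : R) < k%:R by rewrite ltr0n.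
set a := 1 - (k.+1%:R : R)^-1.
set b := 1 + (k%:R : R)^-1.
have ab : a * b = 1.
  rewrite /a /b -natr1; move: (k%:R : R) kp => x xp; field.
  by apply/andP; split; apply: lt0r_neq0; lra.
have a0 : 0 <= a.
  rewrite /a subr_ge0 invf_le1 ?ltr0n // ler1n //.
have b0 : 0 <= b by rewrite /b addr_ge0 // invr_ge0 ler0n.
have hb : b ^+ k <= expR 1.
  have -> : (1 : R) = k%:R * (k%:R)^-1 by rewrite mulfV // lt0r_neq0.
  rewrite expRM_natl; apply: lerXn2r; rewrite ?nnegrE //.
    exact: ltW (expR_gt0 _).
  exact: expR_ge1Dx.
have hab : a ^+ k * b ^+ k = 1 by rewrite -exprMn ab expr1n.
have e0 : 0 < expR (1 : R) := expR_gt0 _.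
have bk0 : 0 < b ^+ k by rewrite exprn_gt0 // /b; by rewrite ltr_pwDl // invr_ge0 ler0n.
have -> : a ^+ k = (b ^+ k)^-1.
  by apply: (mulIf (lt0r_neq0 bk0)); rewrite hab mulVf // lt0r_neq0.
by rewrite lef_pV2 ?posrE.
Qed.
End E.
Section M.
Variable R : realType.
Variable n : nat.
Variable e : rel 'I_n.

Definition flip (x : point n) (i : 'I_n) : point n := [ffun j => if j == i then ~~ x j else x j].

Lemma flip_prob_ge0 (p : 'I_n -> R) x x' : (forall i, 0 <= p i <= 1) -> 0 <= flip_prob p x x'.
Proof.
move=> hp; apply: prodr_ge0 => i _; have /andP[h0 h1] := hp i.
by case: ifP => _ //; rewrite subr_ge0.
Qed.

Lemma flip_prob_sum (p : 'I_n -> R) x : \sum_x' flip_prob p x x' = 1.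
Proof.
rewrite /flip_prob.
rewrite -(bigA_distr_bigA (fun i b => if x i != b then p i else 1 - p i)).
rewrite big1 // => i _; rewrite big_bool /=.
by case: (x i) => /=; ring.
Qed.

Lemma flip_prob_flip (q : R) x i :
  flip_prob (fun _ => q) x (flip x i) = q * (1 - q) ^+ n.-1.
Proof.
rewrite /flip_prob (bigD1 i) //= ffunE eqxx; case: (x i) => /=; congr (_ * _);
  (rewrite (eq_bigr (fun _ => 1 - q)); last by move=> j ji; rewrite ffunE (negbTE ji) eqxx);
  by rewrite prodr_const cardC1 card_ord.
Qed.

Hypothesis n2 : (2 <= n)%N.

Lemma pinv_ok : forall i : 'I_n, 0 <= (n%:R : R)^-1 <= 1.
Proof.
move=> _; rewrite invr_ge0 ler0n /= invf_le1 ?ltr0n ?ler1n //; lia.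
Qed.

Lemma phalf_ok : forall i : 'I_n, 0 <= (2 : R)^-1 <= 1.
Proof. move=> _; rewrite invr_ge0 /= invf_le1 //; lra. Qed.

Lemma mut_ge0 x x' : 0 <= @mut_prob R n e x x'.
Proof.
rewrite /mut_prob; apply: addr_ge0; apply: mulr_ge0; rewrite ?invr_ge0 //;
  apply: flip_prob_ge0 => i; try case: ifP => _; by [apply: phalf_ok | apply: pinv_ok].
Qed.

Lemma mut_sum x : \sum_x' @mut_prob R n e x x' = 1.
Proof.
rewrite /mut_prob big_split /= -!mulr_sumr !flip_prob_sum; lra.
Qed.

Lemma mut_flip x i : ((2 * n%:R * expR 1)^-1 : R) <= mut_prob e x (flip x i).
Proof.
rewrite /mut_prob.
have h1 : 0 <= 2^-1 * flip_prob (fun i0 : 'I_n => if incident e x i0 then 2^-1 else (n%:R : R)^-1) x (flip x i).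
  apply: mulr_ge0; rewrite ?invr_ge0 //; apply: flip_prob_ge0 => j.
  by case: ifP => _; [exact: phalf_ok | exact: pinv_ok].
rewrite flip_prob_flip.
have : (expR (1:R))^-1 <= (1 - (n%:R)^-1) ^+ n.-1.
  have := @pow_bound R n.-1; rewrite prednK; last by lia.
  by apply; lia.
have e0 : 0 < expR (1 : R) := expR_gt0 _.
have np : (0 : R) < n%:R by rewrite ltr0n; lia.
rewrite !invfM => hy.
have h2 : (n%:R : R)^-1 * (expR 1)^-1 <= (n%:R)^-1 * (1 - (n%:R)^-1) ^+ n.-1.
  by apply: ler_wpM2l => //; rewrite invr_ge0 ltW.
rewrite -mulrA; move: h1 h2.
move: (flip_prob _ _ _) ((n%:R : R)^-1 / expR 1) ((n%:R : R)^-1 * (1 - (n%:R)^-1) ^+ n.-1) => A L B h1 h2.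
lra.
Qed.
End M.

Section Drift.
Variable R : realType.
Variable n : nat.
Variable e : rel 'I_n.
Variables sel1 sel2 : pop n -> point n.
Hypothesis hsel1 : forall S : pop n, (0 < #|S|)%N -> sel1 S \in S.
Hypothesis hsel2 : forall S : pop n, (0 < #|S|)%N -> sel2 S \in S.
Hypothesis n2 : (2 <= n)%N.

Definition cc : R := 4 * n%:R * (n%:R + 1) * expR 1.
Definition phi (Q : pop n) : R := cc * h R (mP Q).

Lemma cc_ge0 : 0 <= cc.
Proof. by rewrite /cc !mulr_ge0 ?addr_ge0 // ltW // expR_gt0. Qed.

Lemma phi_ge0 Q : 0 <= phi Q.
Proof. by rewrite /phi mulr_ge0 ?cc_ge0 ?h_ge0. Qed.

Lemma phi_mono Q Q' : (mP Q' <= mP Q)%N -> phi Q' <= phi Q.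
Proof. by move=> H; rewrite /phi ler_wpM2l ?cc_ge0 ?h_mono. Qed.

Lemma ones_flip (x : point n) i : x i -> ones (flip x i) = (ones x).-1.
Proof.
move=> xi; rewrite /ones.
have -> : [set j | flip x i j] = [set j | x j] :\ i.
  apply/setP => j; rewrite !inE ffunE; case: (eqVneq j i) => [->|] //=.
  by rewrite xi.
by rewrite [X in X.-1](cardsD1 i) inE xi.
Qed.

Lemma flip_inj (x : point n) : {in [set i | x i] &, injective (flip x)}.
Proof.
move=> i j; rewrite !inE => xi xj /ffunP /(_ i); rewrite !ffunE eqxx.
case: (eqVneq i j) => // /negbTE ij; rewrite xi; by [].
Qed.

Lemma sum_image (x : point n) (F : point n -> R) : (forall x', 0 <= F x') ->
  \sum_(i in [set i | x i]) F (flip x i) <= \sum_x' F x'.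
Proof.
move=> F0; rewrite -(big_imset _ (@flip_inj x)) /=.
rewrite [X in _ <= X](bigID (mem [set flip x i | i in [set i | x i]])) /=.
by rewrite lerDl sumr_ge0.
Qed.

Lemma sum_ind (u : pop n) (f : pop n -> R) : \sum_P2 (u == P2)%:R * f P2 = f u.
Proof.
rewrite (bigD1 u) //= eqxx mul1r big1 ?addr0 // => P2 /negbTE.
by rewrite eq_sym => ->; rewrite mul0r.
Qed.

Local Notation U := (update sel1 sel2).

Lemma trans_phi (Q : pop n) : \sum_P2 trans e sel1 sel2 Q P2 * phi P2 =
  (#|Q|%:R)^-1 * \sum_(x in Q) \sum_x' @mut_prob R n e x x' * phi (U Q x').
Proof.
rewrite /trans.
transitivity (\sum_P2 \sum_(x in Q) \sum_x' (#|Q|%:R : R)^-1 * (@mut_prob R n e x x' * ((U Q x' == P2)%:R * phi P2))).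
  apply: eq_bigr => P2 _; rewrite mulr_suml; apply: eq_bigr => x _.
  rewrite -mulrA mulr_suml mulr_sumr; apply: eq_bigr => x' _; ring.
rewrite exchange_big mulr_sumr; apply: eq_bigr => x _.
rewrite exchange_big mulr_sumr; apply: eq_bigr => x' _.
by rewrite -mulr_sumr -mulr_sumr sum_ind.
Qed.


Lemma A_le (Q : pop n) (x : point n) : \sum_x' @mut_prob R n e x x' * phi (U Q x') <= phi Q.
Proof.
apply: (@le_trans _ _ (\sum_x' @mut_prob R n e x x' * phi Q)).
  apply: ler_sum => x' _; apply: ler_wpM2l; first exact: mut_ge0.
  exact: phi_mono (mP_update sel2 hsel1 Q x').1.
by rewrite -mulr_suml mut_sum mul1r.
Qed.

Lemma A_star (Q : pop n) (x : point n) : x \in Q -> ones x = mP Q -> (0 < mP Q)%N ->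
  \sum_x' @mut_prob R n e x x' * phi (U Q x') <= phi Q - 2 * (n.+1%:R).
Proof.
move=> xQ hx m0.
set m := mP Q in hx m0 *.
have key : \sum_x' @mut_prob R n e x x' * phi (U Q x') =
    phi Q - \sum_x' @mut_prob R n e x x' * (phi Q - phi (U Q x')).
  rewrite -[X in X - _]mul1r -(@mut_sum R n e x) mulr_suml -sumrB.
  by apply: eq_bigr => x' _; ring.
rewrite key lerD2l lerN2.
have hd : forall x', 0 <= @mut_prob R n e x x' * (phi Q - phi (U Q x')).
  move=> x'; apply: mulr_ge0; first exact: mut_ge0.
  by rewrite subr_ge0; apply: phi_mono (mP_update sel2 hsel1 Q x').1.
apply: le_trans (sum_image x hd).
apply: (@le_trans _ _ (\sum_(i in [set i | x i]) ((2 * n%:R * expR 1)^-1 * (cc * (m%:R)^-1)))).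
  rewrite sumr_const; change #|[set i | x i]| with (ones x); rewrite hx -[_ *+ m]mulr_natr.
  have mp : (0 : R) < m%:R by rewrite ltr0n.
  have np : (0 : R) < n%:R by rewrite ltr0n; lia.
  have e0 : 0 < expR (1 : R) := expR_gt0 _.
  have -> : (n.+1%:R : R) = n%:R + 1 by rewrite natr1.
  rewrite /cc; move: (expR 1) e0 (m%:R : R) mp (n%:R : R) np => E E0 M M0 N N0.
  rewrite le_eqVlt; apply/orP; left; apply/eqP; field.
  by rewrite !lt0r_neq0.
apply: ler_sum => i; rewrite inE => xi.
apply: ler_pM.
- by rewrite invr_ge0 !mulr_ge0 ?ler0n // ltW // expR_gt0.
- by apply: mulr_ge0; [exact: cc_ge0 | rewrite invr_ge0 ler0n].
- exact: mut_flip.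
rewrite /phi -mulrBr; apply: ler_wpM2l; first exact: cc_ge0.
apply: (le_trans (h_gain R m0)); rewrite lerD2l lerN2.
apply: h_mono; rewrite -hx -(ones_flip xi).
exact: (mP_update sel2 hsel1 Q (flip x i)).2.
Qed.


Lemma drift (Q : pop n) : Inv Q -> zero_point n \notin Q ->
  \sum_P2 trans e sel1 sel2 Q P2 * phi P2 <= phi Q - 1.
Proof.
move=> hI hz.
have Q0 : Q != set0 by case/andP: hI.
case: (mP_ex Q0) => xs xsQ hxs.
have m0 : (0 < mP Q)%N.
  rewrite lt0n; apply/eqP => m0.
  have hx := @ones_eq0 n xs; rewrite hxs m0 in hx.
  by rewrite -(hx erefl) xsQ in hz.
rewrite trans_phi.
set A := fun x => \sum_x' @mut_prob R n e x x' * phi (U Q x').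
have hK : (#|Q|%:R : R) <= 2 * n.+1%:R.
  by rewrite -natrM ler_nat; apply: Inv_card.
have hQ : (0 : R) < #|Q|%:R by rewrite ltr0n card_gt0.
have hsum : \sum_(x in Q) A x <= phi Q *+ #|Q| - 2 * n.+1%:R.
  rewrite -sumr_const (bigD1 xs) //= [X in _ <= X - _](bigD1 xs) //=.
  have h1 := A_star xsQ hxs m0.
  have h2 : \sum_(x in Q | x != xs) A x <= \sum_(x in Q | x != xs) phi Q.
    by apply: ler_sum => x _; apply: A_le.
  rewrite /A in h1 h2 *; lra.
rewrite -[phi Q *+ _]mulr_natr in hsum.
have hphi := phi_ge0 Q.
move: hsum hK hQ hphi; move: (\sum_(x in Q) A x) (#|Q|%:R : R) (phi Q) (2 * n.+1%:R : R) => S c p K hS hK hc hp.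
have -> : p - 1 = c^-1 * (p * c - c) by field; rewrite lt0r_neq0.
apply: ler_wpM2l; first by rewrite invr_ge0 ltW.
move: (p * c) hS => pc hS; lra.
Qed.

End Drift.

Section Final.
Variable R : realType.
Variable n : nat.
Variable e : rel 'I_n.
Variables sel1 sel2 : pop n -> point n.
Hypothesis hsel1 : forall S : pop n, (0 < #|S|)%N -> sel1 S \in S.
Hypothesis hsel2 : forall S : pop n, (0 < #|S|)%N -> sel2 S \in S.
Hypothesis n2 : (2 <= n)%N.

Local Notation sv := (@surv R n e sel1 sel2).
Local Notation tr := (@trans R n e sel1 sel2).

Lemma trans_ge0 Q P : 0 <= tr Q P.
Proof.
apply: sumr_ge0 => x _; apply: mulr_ge0; first by rewrite invr_ge0 ler0n.
apply: sumr_ge0 => x' _; apply: mulr_ge0; [exact: mut_ge0 | exact: ler0n].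
Qed.

Lemma init_ge0 (P : pop n) : 0 <= @init_dist R n P.
Proof.
apply: sumr_ge0 => x _; apply: mulr_ge0; [by rewrite invr_ge0 ler0n | exact: ler0n].
Qed.

Lemma surv_ge0 t P : 0 <= sv t P.
Proof.
elim: t P => [|t IH] P /=; case: ifP => // _; first exact: init_ge0.
by apply: sumr_ge0 => Q _; apply: mulr_ge0 => //; apply: trans_ge0.
Qed.

Lemma Inv1 (x : point n) : Inv [set x].
Proof.
rewrite /Inv; apply/andP; split; first by apply/set0Pn; exists x; rewrite inE.
apply/forallP => k; apply: (@leq_trans #|[set x]|); last by rewrite cards1.
by apply: subset_leq_card; apply/subsetP => y; rewrite inE => /andP[].
Qed.

Lemma surv_inv t P : ~~ Inv P -> sv t P = 0.
Proof.
move=> hP; elim: t P hP => [|t IH] P hP /=; case: ifP => // _.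
  rewrite /init_dist big1 // => x _; case: eqP => [hx|]; last by rewrite mulr0.
  by rewrite hx Inv1 in hP.
apply: big1 => Q _; case: (boolP (Inv Q)) => hQ; last by rewrite IH // mul0r.
rewrite /trans big1 ?mulr0 // => x _; rewrite big1 ?mulr0 // => x' _.
case: eqP => [hU|]; last by rewrite mulr0.
by have := @Inv_update _ _ _ hsel1 hsel2 Q x' hQ; rewrite hU (negbTE hP).
Qed.

Lemma surv_zero t (P : pop n) : zero_point n \in P -> sv t P = 0.
Proof. by case: t => [|t] /= ->. Qed.

Definition SS t : R := \sum_P sv t P * phi R P.

Lemma step t : SS t.+1 + tail_prob e sel1 sel2 t <= SS t.
Proof.
have h1 : SS t.+1 <= \sum_Q sv t Q * \sum_P2 tr Q P2 * phi R P2.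
  apply: (@le_trans _ _ (\sum_P2 (\sum_Q sv t Q * tr Q P2) * phi R P2)).
    apply: ler_sum => P2 _; apply: ler_wpM2r; first exact: phi_ge0.
    rewrite /=; case: ifP => // _.
    by apply: sumr_ge0 => Q _; apply: mulr_ge0; [exact: surv_ge0 | exact: trans_ge0].
  rewrite (eq_bigr (fun P2 => \sum_Q sv t Q * (tr Q P2 * phi R P2))); last first.
    by move=> P2 _; rewrite mulr_suml; apply: eq_bigr => Q _; rewrite mulrA.
  rewrite exchange_big /= le_eqVlt; apply/orP; left; apply/eqP.
  by apply: eq_bigr => Q _; rewrite mulr_sumr.
have h2 : \sum_Q sv t Q * (\sum_P2 tr Q P2 * phi R P2) <= \sum_Q sv t Q * (phi R Q - 1).
  apply: ler_sum => Q _.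
  case: (boolP (Inv Q)) => hQ; last by rewrite surv_inv // !mul0r.
  case: (boolP (zero_point n \in Q)) => hz; first by rewrite surv_zero // !mul0r.
  apply: ler_wpM2l; [exact: surv_ge0 | exact: drift].
have h3 : \sum_Q sv t Q * (phi R Q - 1) = SS t - tail_prob e sel1 sel2 t.
  by rewrite /SS /tail_prob -sumrB; apply: eq_bigr => Q _; rewrite mulrBr mulr1.
move: h1 h2 h3; move: (SS t.+1) (SS t) (tail_prob _ _ _ _) (\sum_Q _) (\sum_Q _) => a b c d f.
lra.
Qed.

Lemma SS_ge0 t : 0 <= SS t.
Proof. by apply: sumr_ge0 => P _; apply: mulr_ge0; [exact: surv_ge0 | exact: phi_ge0]. Qed.

Lemma telescope N : expected_time_partial e sel1 sel2 N + SS N <= SS 0.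
Proof.
elim: N => [|N IH]; first by rewrite /expected_time_partial big_ord0 add0r.
rewrite /expected_time_partial big_ord_recr /= -/(expected_time_partial e sel1 sel2 N).
have := step N; move: IH.
move: (expected_time_partial _ _ _ _) (SS N) (SS N.+1) (SS 0) (tail_prob _ _ _ _) => a b c d f.
lra.
Qed.

Lemma init_sum : \sum_P @init_dist R n P = 1.
Proof.
rewrite /init_dist exchange_big /=.
rewrite (eq_bigr (fun _ => ((2 ^ n)%:R : R)^-1)); last first.
  move=> x _; rewrite -mulr_sumr.
  rewrite (eq_bigr (fun P => (([set x] == P)%:R : R) * 1)); last by move=> P _; rewrite eq_sym mulr1.
  by rewrite (@sum_ind R n [set x] (fun _ => (1 : R))) mulr1.
rewrite sumr_const card_ffun card_bool card_ord -[_ *+ _]mulr_natr mulVf //.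
by rewrite pnatr_eq0 expn_eq0.
Qed.

Lemma phi_le (P : pop n) : phi R P <= cc R n * (1 + ln (n%:R : R)).
Proof.
rewrite /phi ler_wpM2l ?cc_ge0 //.
have -> : 1 + ln (n%:R : R) = h R n by rewrite /h; case: eqP => // n0; move: n2; rewrite n0.
by apply: h_mono; apply: mP_len.
Qed.

Lemma SS0_le : SS 0 <= cc R n * (1 + ln (n%:R : R)).
Proof.
apply: (@le_trans _ _ (\sum_P sv 0 P * (cc R n * (1 + ln (n%:R : R))))).
  by apply: ler_sum => P _; apply: ler_wpM2l; [exact: surv_ge0 | exact: phi_le].
rewrite -mulr_suml -[X in _ <= X]mul1r; apply: ler_wpM2r.
  by apply: le_trans (phi_le set0); apply: phi_ge0.
rewrite -init_sum; apply: ler_sum => P _ /=; case: ifP => // _; exact: init_ge0.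
Qed.

Lemma main_bound N : expected_time_partial e sel1 sel2 N <= cc R n * (1 + ln (n%:R : R)).
Proof.
have := telescope N; have := SS_ge0 N; have := SS0_le.
move: (expected_time_partial _ _ _ _) (SS N) (SS 0) (cc R n * _) => a b c d; lra.
Qed.

End Final.

Unset Implicit Arguments.

Theorem lemma9 (R : realType) :
  exists (C : R) (n0 : nat), 0 < C /\
  forall (n : nat) (e : rel 'I_n) (w : 'I_n -> nat)
         (sel1 sel2 : pop n -> point n),
    (n0 <= n)%N ->
    simple_graph e ->
    (forall i, (0 < w i)%N) ->
    argmin_selector (@f1 R n e w) sel1 ->
    argmin_selector (@f2 R n e w) sel2 ->
    forall N : nat,
      expected_time_partial e sel1 sel2 N <= C * (n%:R ^+ 2 * ln (n%:R : R)).
Proof.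
have l2 : (0 : R) < ln 2 by apply: ln_gt0; lra.
have E0 : 0 < expR (1 : R) := expR_gt0 _.
exists (8 * expR 1 * ((ln 2)^-1 + 1)), 2%N; split.
  apply: mulr_gt0; first by apply: mulr_gt0.
  have : (0 : R) < (ln 2)^-1 by rewrite invr_gt0.
  move: ((ln 2)^-1) => t; lra.
move=> n e w sel1 sel2 n2 _ _ h1 h2 N.
have hs1 : forall S : pop n, (0 < #|S|)%N -> sel1 S \in S by move=> S hS; case: (h1 S hS).
have hs2 : forall S : pop n, (0 < #|S|)%N -> sel2 S \in S by move=> S hS; case: (h2 S hS).
apply: le_trans (main_bound R e hs1 hs2 n2 N) _.
have Nge : (2 : R) <= n%:R by rewrite ler_nat.
have Lge : ln 2 <= ln (n%:R : R) by rewrite ler_ln ?posrE //; lra.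
have hc : cc R n <= 8 * n%:R ^+ 2 * expR 1.
  rewrite /cc; move: (n%:R : R) Nge (expR (1:R)) E0 => x hx E hE.
  have h0 : 0 <= x * E * (x - 1) by rewrite !mulr_ge0 ?subr_ge0 //; lra.
  rewrite -subr_ge0 (_ : _ - _ = 4 * (x * E * (x - 1))); last by ring.
  by rewrite mulr_ge0.
have hL : 1 + ln (n%:R : R) <= ((ln 2)^-1 + 1) * ln (n%:R : R).
  have : 1 <= (ln 2)^-1 * ln (n%:R : R).
    have hh : (ln 2)^-1 * ln 2 <= (ln 2)^-1 * ln (n%:R : R).
      by apply: ler_wpM2l => //; rewrite invr_ge0 ltW.
    by rewrite mulVf ?(lt0r_neq0 l2) in hh.
  rewrite mulrDl mul1r; move: (_ * _) => t; lra.
apply: (@le_trans _ _ ((8 * n%:R ^+ 2 * expR 1) * (((ln 2)^-1 + 1) * ln (n%:R : R)))).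
  apply: ler_pM => //; first exact: cc_ge0.
  by apply: addr_ge0 => //; apply: ln_ge0; lra.
rewrite le_eqVlt; apply/orP; left; apply/eqP; ring.
Qed.
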